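(* Let $E$ be an order continuous Banach lattice with a weak unit, represented over a probability space $(\Omega,\Sigma,\mu)$ as in the context, let $Y$ be a Banach space and $T\in\mathrm{DN\text{-}S}(E,Y)$. Then there exists $r>0$ such that for every measurable set $A\subset\Omega$ with $0<\mu(A)<r$, the restriction of $T$ to $E_A=\{x\in E:\operatorname{supp}x\subset A\}$ is an isomorphism (into $Y$).
   Context: A Banach lattice $E$ is order continuous if every net decreasing in order to $0$ converges in norm to $0$; $e\in E_+$ is a weak unit if $|x|\wedge e=0$ implies $x=0$. Representation: every order continuous Banach lattice $E$ with a weak unit can be represented over a probability space $(\Omega,\Sigma,\mu)$ so that $L_\infty(\mu)\subset E\subset L_1(\mu)$, $E$ is dense in $L_1(\mu)$, $L_\infty(\mu)$ is dense in $E$, $\|f\|_1\le\|f\|_E\le 2\|f\|_\infty$ for $f\in L_\infty(\mu)$, and the order of $E$ is the one induced by $L_1(\mu)$; such a representation is fixed. For $x\in E$, $\operatorname{supp}x=\{t\in\Omega: x(t)\neq 0\}$. An operator is strictly singular if it is an isomorphism on no closed infinite-dimensional subspace. $T\in\mathrm{L}(E,Y)$ is disjointly non-singular ($T\in\mathrm{DN\text{-}S}(E,Y)$) if there is no disjoint sequence $(x_n)$ of non-zero vectors of $E$ such that the restriction of $T$ to the closed span $[x_n]$ is strictly singular. *)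

(* Defs.v *)
From HB Require Import structures.
From mathcomp Require Import all_boot all_order all_algebra.
From mathcomp Require Import all_classical all_reals all_analysis.
Import Order.TTheory GRing.Theory Num.Theory numFieldNormedType.Exports.
Set Implicit Arguments. Unset Strict Implicit. Unset Printing Implicit Defensive.
Local Open Scope classical_set_scope.
Local Open Scope ring_scope.

(* Elements of the Köthe-type space E are functions Omega -> R, identified
   modulo mu-a.e. equality (E is a set of functions closed under a.e. change,
   nE a lattice seminorm vanishing exactly on null functions). *)

Definition ae_eq d (Omega : measurableType d) (R : realType)
  (mu : probability Omega R) (f g : Omega -> R) : Prop :=
  {ae mu, forall t, f t = g t}.

Definition ae_le d (Omega : measurableType d) (R : realType)
  (mu : probability Omega R) (f g : Omega -> R) : Prop :=
  {ae mu, forall t, f t <= g t}.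

Definition fsub d (Omega : measurableType d) (R : realType) (f g : Omega -> R) :
  Omega -> R := fun t => f t - g t.

(* E (with norm nE) is an order continuous Banach lattice with a weak unit,
   represented over the probability space (Omega, mu) as in the context:
   L_oo(mu) c E c L_1(mu), E dense in L_1, L_oo dense in E,
   ||f||_1 <= ||f||_E <= 2 ||f||_oo on L_oo, pointwise a.e. order. *)
Record ocbl_repr d (Omega : measurableType d) (R : realType)
    (mu : probability Omega R) (E : set (Omega -> R)) (nE : (Omega -> R) -> R)
    : Prop := {
  E_meas : forall f, E f -> measurable_fun setT f;
  E_int : forall f, E f -> mu.-integrable setT (EFin \o f);
  E_ae : forall f g, E f -> measurable_fun setT g -> ae_eq mu f g -> E g;
  E_zero : E (fun _ => 0);
  E_add : forall f g, E f -> E g -> E (fun t => f t + g t);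
  E_scale : forall (a : R) f, E f -> E (fun t => a * f t);
  E_abs : forall f, E f -> E (fun t => `|f t|);
  nE_triangle : forall f g, E f -> E g ->
    nE (fun t => f t + g t) <= nE f + nE g;
  nE_scale : forall (a : R) f, E f -> nE (fun t => a * f t) = `|a| * nE f;
  nE_eq0 : forall f, E f -> (nE f = 0 <-> ae_eq mu f (fun _ => 0));
  nE_lattice : forall f g, E f -> E g ->
    ae_le mu (fun t => `|f t|) (fun t => `|g t|) -> nE f <= nE g;
  E_complete : forall u : nat -> Omega -> R, (forall n, E (u n)) ->
    (forall eps : R, 0 < eps -> exists N : nat, forall m n : nat,
        (N <= m)%N -> (N <= n)%N -> nE (fsub (u m) (u n)) < eps) ->
    exists f, E f /\ forall eps : R, 0 < eps ->
      exists N : nat, forall n : nat, (N <= n)%N -> nE (fsub (u n) f) < eps;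
  E_ordcont : forall (I : Type) (le : I -> I -> Prop) (x : I -> Omega -> R),
    (exists i : I, True) ->
    (forall i, le i i) ->
    (forall i j k, le i j -> le j k -> le i k) ->
    (forall i j, exists k, le i k /\ le j k) ->
    (forall i, E (x i)) ->
    (forall i j, le i j -> ae_le mu (x j) (x i)) ->
    (forall i, ae_le mu (fun _ => 0) (x i)) ->
    (forall y, E y -> (forall i, ae_le mu y (x i)) -> ae_le mu y (fun _ => 0)) ->
    forall eps : R, 0 < eps -> exists i0, forall i, le i0 i -> nE (x i) < eps;
  E_weak_unit : exists e, E e /\ ae_le mu (fun _ => 0) e /\
    forall x, E x -> ae_eq mu (fun t => Num.min `|x t| (e t)) (fun _ => 0) ->
      ae_eq mu x (fun _ => 0);
  Linf_sub : forall (f : Omega -> R) (M : R), measurable_fun setT f ->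
    ae_le mu (fun t => `|f t|) (fun _ => M) ->
    [/\ E f, nE f <= 2 * M &
        (\int[mu]_t (`|f t|)%:E <= (nE f)%:E)%E];
  Linf_dense : forall f, E f -> forall eps : R, 0 < eps ->
    exists (g : Omega -> R) (M : R), [/\ measurable_fun setT g,
      ae_le mu (fun t => `|g t|) (fun _ => M) & nE (fsub f g) < eps];
  E_dense_L1 : forall f : Omega -> R, mu.-integrable setT (EFin \o f) ->
    forall eps : R, 0 < eps -> exists g, E g /\
      (\int[mu]_t (`|f t - g t|)%:E < eps%:E)%E
}.

Record bdd_op d (Omega : measurableType d) (R : realType)
    (mu : probability Omega R) (E : set (Omega -> R)) (nE : (Omega -> R) -> R)
    (Y : normedModType R) (T : (Omega -> R) -> Y) : Prop := {
  T_add : forall f g, E f -> E g -> T (fun t => f t + g t) = T f + T g;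
  T_scale : forall (a : R) f, E f -> T (fun t => a * f t) = a *: T f;
  T_ae : forall f g, E f -> E g -> ae_eq mu f g -> T f = T g;
  T_bdd : exists C : R, forall f, E f -> `|T f| <= C * nE f
}.

(* T restricted to Z is an isomorphism (into Y); boundedness is part of bdd_op *)
Definition iso_on d (Omega : measurableType d) (R : realType)
    (nE : (Omega -> R) -> R) (Y : normedModType R) (T : (Omega -> R) -> Y)
    (Z : set (Omega -> R)) : Prop :=
  exists c : R, 0 < c /\ forall z, Z z -> c * nE z <= `|T z|.

Definition closed_subspace d (Omega : measurableType d) (R : realType)
    (mu : probability Omega R) (E : set (Omega -> R)) (nE : (Omega -> R) -> R)
    (Z : set (Omega -> R)) : Prop :=
  [/\ Z `<=` E, Z (fun _ => 0),
      (forall f g, Z f -> Z g -> Z (fun t => f t + g t)) /\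
      forall (a : R) f, Z f -> Z (fun t => a * f t),
      forall f g, Z f -> E g -> ae_eq mu f g -> Z g &
      forall (u : nat -> Omega -> R) f, (forall n, Z (u n)) -> E f ->
        (forall eps : R, 0 < eps -> exists N : nat, forall n : nat,
           (N <= n)%N -> nE (fsub (u n) f) < eps) -> Z f].

Definition infinite_dim d (Omega : measurableType d) (R : realType)
    (mu : probability Omega R) (Z : set (Omega -> R)) : Prop :=
  forall n : nat, exists v : 'I_n -> Omega -> R, (forall i, Z (v i)) /\
    forall a : 'I_n -> R,
      ae_eq mu (fun t => \sum_(i < n) a i * v i t) (fun _ => 0) ->
      forall i, a i = 0.

Definition strictly_singular_on d (Omega : measurableType d) (R : realType)
    (mu : probability Omega R) (E : set (Omega -> R)) (nE : (Omega -> R) -> R)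
    (Y : normedModType R) (T : (Omega -> R) -> Y) (W : set (Omega -> R)) : Prop :=
  forall Z, closed_subspace mu E nE Z -> Z `<=` W -> infinite_dim mu Z ->
    ~ iso_on nE T Z.

Definition closed_span d (Omega : measurableType d) (R : realType)
    (E : set (Omega -> R)) (nE : (Omega -> R) -> R) (x : nat -> Omega -> R)
    : set (Omega -> R) :=
  [set f | E f /\ forall eps : R, 0 < eps -> exists (N : nat) (a : nat -> R),
     nE (fsub f (fun t => \sum_(k < N) a k * x k t)) < eps].

Definition disjoint_nonzero_seq d (Omega : measurableType d) (R : realType)
    (mu : probability Omega R) (E : set (Omega -> R)) (x : nat -> Omega -> R)
    : Prop :=
  [/\ forall n, E (x n),
      forall n, ~ ae_eq mu (x n) (fun _ => 0) &
      forall n m, n <> m ->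
        ae_eq mu (fun t => Num.min `|x n t| `|x m t|) (fun _ => 0)].

Definition DNS d (Omega : measurableType d) (R : realType)
    (mu : probability Omega R) (E : set (Omega -> R)) (nE : (Omega -> R) -> R)
    (Y : normedModType R) (T : (Omega -> R) -> Y) : Prop :=
  ~ exists x : nat -> Omega -> R, disjoint_nonzero_seq mu E x /\
      strictly_singular_on mu E nE T (closed_span E nE x).

(* E_A = {x in E : supp x c A} (supports up to null sets, as x is a class) *)
Definition E_sub d (Omega : measurableType d) (R : realType)
    (mu : probability Omega R) (E : set (Omega -> R)) (A : set Omega)
    : set (Omega -> R) :=
  [set x | E x /\ {ae mu, forall t, ~ A t -> x t = 0}].

(* Main.v *)
Require Import Defs.
From HB Require Import structures.
From mathcomp Require Import all_boot all_order all_algebra.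
From mathcomp Require Import all_classical all_reals all_analysis.
From mathcomp Require Import ring lra.
Import Order.TTheory GRing.Theory Num.Theory numFieldNormedType.Exports.
Local Open Scope classical_set_scope.
Local Open Scope ring_scope.
Set Implicit Arguments. Unset Strict Implicit. Unset Printing Implicit Defensive.

Section Basic.
Variables (d : measure_display) (Omega : measurableType d) (R : realType)
  (mu : probability Omega R) (E : set (Omega -> R)) (nE : (Omega -> R) -> R).
Hypothesis HE : ocbl_repr mu E nE.

Lemma fsubE (f g : Omega -> R) : fsub f g = (fun t => f t + (-1) * g t).
Proof. by apply: funext => t; rewrite /fsub mulN1r. Qed.

Lemma E_fsub f g : E f -> E g -> E (fsub f g).
Proof. by move=> Ef Eg; rewrite fsubE; apply: (E_add HE) => //; apply: (E_scale HE). Qed.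

Lemma nE0 : nE (fun _ => 0) = 0.
Proof.
have := nE_scale HE 0 (E_zero HE).
have -> : (fun t : Omega => 0 * (0:R)) = (fun _ => 0) by apply: funext => t; rewrite mul0r.
by rewrite normr0 mul0r.
Qed.

Lemma nE_ge0 f : E f -> 0 <= nE f.
Proof.
move=> Ef.
have := nE_triangle HE Ef (E_scale HE (-1) Ef).
have -> : (fun t => f t + (-1) * f t) = (fun _ => 0) by apply: funext => t; rewrite mulN1r subrr.
rewrite nE0 (nE_scale HE _ Ef) normrN normr1 mul1r => h.
by rewrite -(@pmulr_rge0 _ 2) // mulr2n mulrDl mul1r.
Qed.

Lemma nE_fsub_sym f g : E f -> E g -> nE (fsub f g) = nE (fsub g f).
Proof.
move=> Ef Eg.
have -> : fsub f g = (fun t => (-1) * fsub g f t) by apply: funext => t; rewrite /fsub mulN1r opprB.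
by rewrite (nE_scale HE _ (E_fsub Eg Ef)) normrN normr1 mul1r.
Qed.

Lemma nE_fsub_tri f g h : E f -> E g -> E h ->
  nE (fsub f h) <= nE (fsub f g) + nE (fsub g h).
Proof.
move=> Ef Eg Eh.
have -> : fsub f h = (fun t => fsub f g t + fsub g h t) by apply: funext => t; rewrite /fsub addrA subrK.
exact: (nE_triangle HE (E_fsub Ef Eg) (E_fsub Eg Eh)).
Qed.

Lemma nE_le f g : E f -> E g -> (forall t, `|f t| <= `|g t|) -> nE f <= nE g.
Proof. by move=> Ef Eg h; apply: (nE_lattice HE Ef Eg); apply: aeW. Qed.

Lemma bddE (f : Omega -> R) (M : R) : measurable_fun setT f -> (forall t, `|f t| <= M) ->
  E f /\ nE f <= 2 * M.
Proof.
move=> mf hM.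
have [] := Linf_sub HE mf (aeW _ hM) => Ef hn _.
by split.
Qed.

Lemma nE_add_le f g : E f -> E g -> nE (fun t => f t + g t) <= nE f + nE g.
Proof. exact: (nE_triangle HE). Qed.

Lemma nE_rev f g : E f -> E g -> nE f - nE (fsub f g) <= nE g.
Proof.
move=> Ef Eg.
have := nE_triangle HE (E_fsub Ef Eg) Eg.
have -> : (fun t => fsub f g t + g t) = f by apply: funext => t; rewrite /fsub subrK.
by rewrite lerBlDl.
Qed.

End Basic.

Section Sums.
Variables (d : measure_display) (Omega : measurableType d) (R : realType)
  (mu : probability Omega R) (E : set (Omega -> R)) (nE : (Omega -> R) -> R).
Hypothesis HE : ocbl_repr mu E nE.
Variables (Y : normedModType R) (T : (Omega -> R) -> Y).
Hypothesis HT : bdd_op mu E nE T.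

Lemma closed_sum (S : set (Omega -> R)) (I : Type) (r : seq I) (c : I -> R)
  (v : I -> Omega -> R) :
  S (fun _ => 0) -> (forall f g, S f -> S g -> S (fun t => f t + g t)) ->
  (forall a f, S f -> S (fun t => a * f t)) ->
  (forall i, S (v i)) -> S (fun t => \sum_(i <- r) c i * v i t).
Proof.
move=> S0 Sadd Ssc Sv; elim: r => [|i r IH].
  by under eq_fun do rewrite big_nil.
under eq_fun do rewrite big_cons.
by apply: Sadd => //; apply: Ssc.
Qed.

Lemma E_sum (I : Type) (r : seq I) (c : I -> R) (v : I -> Omega -> R) :
  (forall i, E (v i)) -> E (fun t => \sum_(i <- r) c i * v i t).
Proof. by apply: closed_sum; [exact: (E_zero HE)|exact: (E_add HE)|exact: (E_scale HE)]. Qed.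

Lemma T_sum (I : Type) (r : seq I) (c : I -> R) (v : I -> Omega -> R) :
  (forall i, E (v i)) -> T (fun t => \sum_(i <- r) c i * v i t) = \sum_(i <- r) c i *: T (v i).
Proof.
move=> Ev; elim: r => [|i r IH].
  under eq_fun do rewrite big_nil.
  rewrite big_nil.
  have := T_scale HT 0 (E_zero HE).
  have -> : (fun t : Omega => 0 * (0:R)) = (fun _ => 0) by apply: funext => t; rewrite mul0r.
  by rewrite scale0r.
under eq_fun do rewrite big_cons.
rewrite big_cons (T_add HT) ?(T_scale HT) ?IH //; last exact: E_sum.
exact: (E_scale HE).
Qed.

Lemma nE_sum (I : Type) (r : seq I) (c : I -> R) (v : I -> Omega -> R) :
  (forall i, E (v i)) -> nE (fun t => \sum_(i <- r) c i * v i t) <= \sum_(i <- r) `|c i| * nE (v i).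
Proof.
move=> Ev; elim: r => [|i r IH].
  under eq_fun do rewrite big_nil.
  by rewrite big_nil (nE0 HE).
under eq_fun do rewrite big_cons.
rewrite big_cons; apply: le_trans (nE_triangle HE _ _) _.
- exact: (E_scale HE).
- exact: E_sum.
by rewrite (nE_scale HE _ (Ev i)) lerD2l.
Qed.

Lemma T_fsub f g : E f -> E g -> T (fsub f g) = T f - T g.
Proof.
move=> Ef Eg; rewrite fsubE (T_add HT) //; last exact: (E_scale HE).
by rewrite (T_scale HT) // scaleN1r.
Qed.

End Sums.
Lemma small_pow2 (R : realType) (δ : R) : 0 < δ -> exists n : nat, ((2 ^ n)%:R)^-1 < δ.
Proof.
move=> d0; exists (Num.Def.archi_bound δ^-1).
have h0 : 0 < δ^-1 by rewrite invr_gt0.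
have h1 := archi_boundP (ltW h0).
rewrite invf_plt ?posrE ?ltr0n ?expn_gt0 //.
apply: lt_trans h1 _; rewrite ltr_nat; exact: ltn_expl.
Qed.

Lemma indic_sub (T : Type) (R : realType) (A B : set T) t :
  A `<=` B -> (\1_A t : R) <= \1_B t.
Proof.
move=> AB; rewrite !indicE; have [At|nAt] := boolP (t \in A).
  by rewrite (mem_set (AB _ (set_mem At))).
by rewrite ler0n.
Qed.

Lemma indic_ge0 (T : Type) (R : realType) (A : set T) t : 0 <= (\1_A t : R).
Proof. by rewrite indicE ler0n. Qed.

Lemma indic_le1 (T : Type) (R : realType) (A : set T) t : (\1_A t : R) <= 1.
Proof. by rewrite indicE lern1 leq_b1. Qed.

Lemma indic_abs (T : Type) (R : realType) (A : set T) t : `|(\1_A t : R)| = \1_A t.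
Proof. by rewrite ger0_norm // indic_ge0. Qed.

Lemma indic_out (T : Type) (R : realType) (A : set T) t : ~ A t -> (\1_A t : R) = 0.
Proof. by move=> nA; rewrite indicE memNset. Qed.

Lemma indic_in (T : Type) (R : realType) (A : set T) t : A t -> (\1_A t : R) = 1.
Proof. by move=> hA; rewrite indicE mem_set. Qed.

Section AC.
Variables (d : measure_display) (Omega : measurableType d) (R : realType)
  (mu : probability Omega R) (E : set (Omega -> R)) (nE : (Omega -> R) -> R).
Hypothesis HE : ocbl_repr mu E nE.

Lemma E_indic (D : set Omega) : measurable D -> E (\1_D : Omega -> R).
Proof.
move=> mD; have hb : forall t, `|(\1_D t : R)| <= 1 by move=> t; rewrite indic_abs indic_le1.
by have [] := Linf_sub HE (@measurable_realfun.measurable_indic _ _ R setT D mD) (aeW _ hb).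
Qed.

Lemma AC (e : R) : 0 < e -> exists2 eta : R, 0 < eta &
  forall D : set Omega, measurable D -> (mu D <= eta%:E)%E -> nE (\1_D : Omega -> R) <= e.
Proof.
move=> e0; apply: contrapT => H.
have H' : forall k : nat, exists D : set Omega, [/\ measurable D,
   (mu D <= (((2 ^ k.+1)%:R)^-1)%:E)%E & e < nE (\1_D : Omega -> R)].
  move=> k; apply: contrapT => nD; apply: H; exists (((2 ^ k.+1)%:R)^-1).
    by rewrite invr_gt0 ltr0n expn_gt0.
  move=> D mD muD; rewrite leNgt; apply/negP => enD; apply: nD; exists D; by split.
have [C hC] := choice H'.
pose F n := \bigcup_k C (k + n)%N.
have mC k : measurable (C k) by case: (hC k).
have mF n : measurable (F n) by apply: bigcupT_measurable => k.
have muF n : (mu (F n) <= (((2 ^ n)%:R)^-1)%:E)%E.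
  have hs := @measure_sigma_subadditive _ _ _ mu (F n) (fun k => C (k + n)%N) (fun k => mC _) (mF n) (@subset_refl _ _).
  apply: le_trans hs _.
  have p0 : (0:R) <= ((2 ^ n)%:R)^-1 by rewrite invr_ge0 ler0n.
  have := @epsilon_trick R (fun _ => 0%E) (((2 ^ n)%:R)^-1 : R) predT (fun=> lexx _) p0.
  rewrite [X in (_ <= X + _)%E]eseries0 // add0e; apply: le_trans.
  apply: lee_nneseries => [i _ _|i _]; first exact: measure_ge0.
  rewrite add0e; case: (hC (i + n)%N) => _ h _; apply: le_trans h _.
  by rewrite lee_fin -addSn expnD natrM invfM mulrC.
pose G := \bigcap_n F n.
have mG : measurable G by apply: bigcapT_measurable.
have nullG : mu G = 0%E.
  apply/eqP; rewrite eq_le measure_ge0 andbT; apply/lee_addgt0Pr => δ δ0.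
  rewrite add0e; have [n hn] := small_pow2 δ0.
  apply: le_trans (le_measure mu (mem_set mG) (mem_set (mF n)) _) _.
    by move=> t; apply.
  by apply: le_trans (muF n) _; rewrite lee_fin ltW.
pose le := fun i j : nat => (i <= j)%N.
pose x := fun n => (\1_(F n) : Omega -> R).
have c1 : exists i : nat, True by exists 0%N.
have c2 : forall i, le i i by move=> i; exact: leqnn.
have c3 : forall i j k, le i j -> le j k -> le i k by move=> i j k; apply: leq_trans.
have c4 : forall i j, exists k, le i k /\ le j k.
  by move=> i j; exists (maxn i j); rewrite /le leq_maxl leq_maxr.
have c5 : forall i, E (x i) by move=> i; apply: E_indic.
have c6 : forall i j, le i j -> ae_le mu (x j) (x i).
  move=> i j ij; apply: aeW => t; apply: indic_sub.
  move=> s [k _ hk]; exists (k + (j - i))%N => //.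
  by rewrite -addnA subnK.
have c7 : forall i, ae_le mu (fun _ => 0) (x i) by move=> i; apply: aeW => t; apply: indic_ge0.
have c8 : forall y, E y -> (forall i, ae_le mu y (x i)) -> ae_le mu y (fun _ => 0).
  move=> y Ey hy.
  have hall := ae_foralln hy.
  have hG : \forall t \ae mu, ~ G t.
    by exists G; split => // t /=; apply: contrapT.
  apply: filterS2 hall hG => t hyt nGt.
  have [n nFn] : exists n, ~ F n t by apply: contrapT => hn; apply: nGt => n _; apply: contrapT => h; apply: hn; exists n.
  by have := hyt n; rewrite /x indic_out.
have [i0 hi0] := E_ordcont HE c1 c2 c3 c4 c5 c6 c7 c8 e0.
case: (hC i0) => mCi _ ei.
have := hi0 i0 (leqnn _).
apply/negP; rewrite -leNgt; apply: (le_trans (ltW ei)).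
apply: (nE_le HE); [exact: E_indic|exact: E_indic|].
move=> t; rewrite !indic_abs; apply: indic_sub.
by move=> s hs; exists 0%N.
Qed.

End AC.

Section Pick.
Variables (d : measure_display) (Omega : measurableType d) (R : realType)
  (mu : probability Omega R) (E : set (Omega -> R)) (nE : (Omega -> R) -> R).
Hypothesis HE : ocbl_repr mu E nE.
Variables (Y : normedModType R) (T : (Omega -> R) -> Y).
Hypothesis HT : bdd_op mu E nE T.

Lemma KT_ex : exists2 K : R, 0 <= K & forall f, E f -> `|T f| <= K * nE f.
Proof.
have [C hC] := T_bdd HT; exists `|C| => // f Ef.
apply: le_trans (hC f Ef) _.
apply: ler_wpM2r; [exact: (nE_ge0 HE Ef)|exact: ler_norm].
Qed.

Variables (K : R).
Hypothesis K0 : 0 <= K.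
Hypothesis hK : forall f, E f -> `|T f| <= K * nE f.
Hypothesis Hneg : forall r : R, 0 < r -> exists A : set Omega,
  [/\ measurable A, (mu A < r%:E)%E & ~ iso_on nE T (E_sub mu E A)].

Lemma pick (r e : R) : 0 < r -> 0 < e -> exists w : Omega -> R, exists A : set Omega,
  exists M : R, [/\ measurable A, (mu A < r%:E)%E, measurable_fun setT w,
    ae_le mu (fun t => `|w t|) (fun _ => M) & 0 <= M] /\
    [/\ (forall t, ~ A t -> w t = 0), 1/2 <= nE w & `|T w| <= e].
Proof.
move=> r0 e0.
have [A [mA muA niso]] := Hneg r0.
have [z [[Ez supz] hz]] : exists z, E_sub mu E A z /\ `|T z| < (e/2) * nE z.
  apply: contrapT => hn; apply: niso; exists (e/2); split; first by rewrite divr_gt0.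
  move=> z Zz; rewrite leNgt; apply/negP => hl; apply: hn; exists z; by split.
have nz0 : 0 < nE z.
  have : 0 < e / 2 * nE z by apply: le_lt_trans hz.
  by rewrite pmulr_rgt0 // divr_gt0.
pose z' := fun t => (nE z)^-1 * z t.
have Ez' : E z' by apply: (E_scale HE).
have nz' : nE z' = 1.
  by rewrite /z' (nE_scale HE _ Ez) ger0_norm ?invr_ge0 ?ltW // mulVf // gt_eqF.
have Tz' : `|T z'| < e/2.
  rewrite /z' (T_scale HT _ Ez) normrZ ger0_norm ?invr_ge0 ?ltW //.
  by rewrite mulrC ltr_pdivrMr.
pose eta := Num.min (1/2) (e / (2 * (K + 1))).
have K10 : 0 < K + 1 by apply: lt_le_trans (ltr01) _; rewrite lerDr.
have eta0 : 0 < eta by rewrite lt_min !divr_gt0 // mulr_gt0.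
have [g [M0 [mg gM ngz]]] := Linf_dense HE Ez' eta0.
have Eg : E g by case: (Linf_sub HE mg gM).
pose w := fun t => \1_A t * g t.
have mw : measurable_fun setT w.
  exact: measurable_realfun.measurable_funM (@measurable_realfun.measurable_indic _ _ R setT A mA) mg.
have wM : ae_le mu (fun t => `|w t|) (fun _ => `|M0|).
  apply: filterS gM => t /= h; rewrite /w normrM indic_abs.
  apply: le_trans (ler_norm M0); apply: le_trans h.
  by apply: ler_piMl; rewrite ?indic_le1.
have Ew : E w by case: (Linf_sub HE mw wM).
have zw : nE (fsub z' w) <= nE (fsub z' g).
  apply: (nE_lattice HE (E_fsub HE Ez' Ew) (E_fsub HE Ez' Eg)).
  apply: filterS supz => t hs; rewrite /fsub /w /z'.
  case: (pselect (A t)) => At; first by rewrite indic_in // mul1r.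
  by rewrite indic_out // mul0r hs // mulr0 subr0 normr0.
have small : nE (fsub z' w) <= eta by apply: le_trans zw (ltW ngz).
exists w, A, `|M0|; split; first by split.
split.
- by move=> t nAt; rewrite /w indic_out // mul0r.
- have := nE_rev HE Ez' Ew; rewrite nz'; apply: le_trans.
  rewrite lerBrDr -lerBrDl; apply: le_trans small _.
  rewrite ge_min; apply/orP; left.
  by rewrite [X in X - _](splitr 1) addrK.
- have -> : T w = T z' - T (fsub z' w) by rewrite (T_fsub HE HT Ez' Ew) opprB addrC subrK.
  apply: le_trans (ler_normB _ _) _.
  rewrite [e](splitr e); apply: lerD; first exact: ltW.
  apply: le_trans (hK (E_fsub HE Ez' Ew)) _.
  apply: (@le_trans _ _ (K * eta)); first by apply: ler_wpM2l.
  apply: (@le_trans _ _ (K * (e / (2 * (K + 1))))); first by apply: ler_wpM2l => //; rewrite ge_min lexx orbT.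
  have -> : K * (e / (2 * (K + 1))) = (K / (K + 1)) * (e / 2).
    by field; rewrite gt_eqF.
  apply: ler_piMl; first by rewrite divr_ge0 // ltW.
  by rewrite ler_pdivrMr // mul1r lerDl.
Qed.

End Pick.

Definition eps (R : realType) (n : nat) : R := ((2 ^ n.+3)%:R)^-1.

Lemma eps_gt0 (R : realType) n : 0 < eps R n.
Proof. by rewrite /eps invr_gt0 ltr0n expn_gt0. Qed.

Lemma eps_le (R : realType) n : eps R n <= 1/8.
Proof.
rewrite /eps mul1r lef_pV2 ?posrE ?ltr0n ?expn_gt0 //.
have -> : (8 : R) = (2 ^ 3)%:R by rewrite natrX.
by rewrite ler_nat leq_exp2l.
Qed.

Section Construct.
Variables (d : measure_display) (Omega : measurableType d) (R : realType)
  (mu : probability Omega R) (E : set (Omega -> R)) (nE : (Omega -> R) -> R).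
Hypothesis HE : ocbl_repr mu E nE.
Variables (Y : normedModType R) (T : (Omega -> R) -> Y).
Hypothesis HT : bdd_op mu E nE T.
Variables (K : R).
Hypothesis K0 : 0 <= K.
Hypothesis hK : forall f, E f -> `|T f| <= K * nE f.
Hypothesis Hneg : forall r : R, 0 < r -> exists A : set Omega,
  [/\ measurable A, (mu A < r%:E)%E & ~ iso_on nE T (E_sub mu E A)].

Definition Ppick (p : R * R) (q : (Omega -> R) * set Omega * R) :=
  let: (w, A, M) := q in
  [/\ measurable A, (mu A < p.1%:E)%E, measurable_fun setT w,
    ae_le mu (fun t => `|w t|) (fun _ => M) & 0 <= M] /\
    [/\ (forall t, ~ A t -> w t = 0), 1/2 <= nE w & `|T w| <= p.2].

Lemma pick_ex (p : R * R) : exists q, 0 < p.1 -> 0 < p.2 -> Ppick p q.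
Proof.
case: (pselect (0 < p.1 /\ 0 < p.2)) => [[h1 h2]|h].
  have [w [A [M H]]] := pick HE HT K0 hK Hneg h1 h2.
  by exists (w, A, M).
by exists ((fun _ => 0), set0, 0) => h1 h2; exfalso; apply: h.
Qed.

Definition pickf := projT1 (choice pick_ex).
Lemma pickfP p : 0 < p.1 -> 0 < p.2 -> Ppick p (pickf p).
Proof. exact: (projT2 (choice pick_ex) p). Qed.

Lemma eta_ex (e : R) : exists eta : R, 0 < e -> 0 < eta /\
  forall D : set Omega, measurable D -> (mu D <= eta%:E)%E -> nE (\1_D : Omega -> R) <= e.
Proof.
case: (pselect (0 < e)) => [e0|h].
  have [eta h1 h2] := AC HE e0; by exists eta.
by exists 0 => e0; exfalso.
Qed.

Definition etaf := projT1 (choice eta_ex).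
Lemma etafP e : 0 < e -> 0 < etaf e /\
  forall D : set Omega, measurable D -> (mu D <= (etaf e)%:E)%E -> nE (\1_D : Omega -> R) <= e.
Proof. exact: (projT2 (choice eta_ex) e). Qed.

Fixpoint st (n : nat) : ((Omega -> R) * set Omega * R) * R :=
  let b := match n with 0 => 1 | k.+1 => (st k).2 end in
  let q := pickf (b / (2 ^ n.+1)%:R, eps R n) in
  (q, Num.min b (etaf (eps R n / (q.2 + 1)))).

Definition beta n := match n with 0 => 1 | k.+1 => (st k).2 end.
Definition ww n := (st n).1.1.1.
Definition AA n := (st n).1.1.2.
Definition MM n := (st n).1.2.

Lemma st1 n : (st n).1 = pickf (beta n / (2 ^ n.+1)%:R, eps R n).
Proof. by case: n. Qed.

Lemma beta_S n : beta n.+1 = Num.min (beta n) (etaf (eps R n / (MM n + 1))).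
Proof. by rewrite /MM st1 /beta; case: n. Qed.

Lemma stP0 n : 0 < beta n -> Ppick (beta n / (2 ^ n.+1)%:R, eps R n) (ww n, AA n, MM n).
Proof.
move=> b0; rewrite /ww /AA /MM st1.
have := pickfP (p := (beta n / (2 ^ n.+1)%:R, eps R n)).
case: (pickf _) => [[w A] M] /= h; apply: h; last exact: eps_gt0.
by rewrite divr_gt0 // ltr0n expn_gt0.
Qed.

Lemma beta_gt0 n : 0 < beta n.
Proof.
elim: n => [|n b0]; first exact: ltr01.
rewrite beta_S lt_min b0 /=; apply: (etafP _).1.
rewrite divr_gt0 ?eps_gt0 //.
have [[_ _ _ _ M0] _] := stP0 b0.
exact: ltr_wpDl M0 ltr01.
Qed.

Lemma stP n : Ppick (beta n / (2 ^ n.+1)%:R, eps R n) (ww n, AA n, MM n).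
Proof. exact: stP0 (beta_gt0 n). Qed.

Lemma beta_le n k : beta (k + n) <= beta n.
Proof.
elim: k => [|k IH] //; apply: le_trans IH.
have -> : (k.+1 + n)%N = (k + n).+1 by [].
by rewrite beta_S ge_min lexx.
Qed.

Lemma PP n : [/\ measurable (AA n), (mu (AA n) < (beta n / (2 ^ n.+1)%:R)%:E)%E,
    measurable_fun setT (ww n),
    ae_le mu (fun t => `|ww n t|) (fun _ => MM n) & 0 <= MM n] /\
    [/\ (forall t, ~ AA n t -> ww n t = 0), 1/2 <= nE (ww n) & `|T (ww n)| <= eps R n].
Proof. exact: stP. Qed.

Lemma Eww n : E (ww n).
Proof. have [[_ _ mw wM _] _] := PP n; by case: (Linf_sub HE mw wM). Qed.

Definition UU n := \bigcup_k AA (k + n.+1)%N.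
Lemma mUU n : measurable (UU n).
Proof. by apply: bigcupT_measurable => k; case: (PP (k + n.+1)%N) => [[]]. Qed.

Definition etan n := etaf (eps R n / (MM n + 1)).

Lemma etan_gt0 n : 0 < etan n.
Proof.
apply: (etafP _).1; rewrite divr_gt0 ?eps_gt0 //.
have [[_ _ _ _ M0] _] := PP n; exact: ltr_wpDl M0 ltr01.
Qed.

Lemma muUU n : (mu (UU n) <= (etan n)%:E)%E.
Proof.
have mA k : measurable (AA k) by case: (PP k) => [[]].
have hs := @measure_sigma_subadditive _ _ _ mu (UU n) (fun k => AA (k + n.+1)%N) (fun k => mA _) (mUU n) (@subset_refl _ _).
apply: le_trans hs _.
have p0 : (0:R) <= etan n by apply: ltW; apply: etan_gt0.
have := @epsilon_trick R (fun _ => 0%E) (etan n) predT (fun=> lexx _) p0.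
rewrite [X in (_ <= X + _)%E]eseries0 // add0e; apply: le_trans.
apply: lee_nneseries => [i _ _|i _]; first exact: measure_ge0.
rewrite add0e; case: (PP (i + n.+1)%N) => [[_ h _ _ _] _]; apply: le_trans (ltW h) _.
rewrite lee_fin; apply: ler_pM.
- exact: ltW (beta_gt0 _).
- by rewrite invr_ge0 ler0n.
- apply: le_trans (beta_le _ _) _; rewrite beta_S ge_min lexx orbT //.
- by rewrite lef_pV2 ?posrE ?ltr0n ?expn_gt0 // ler_nat leq_exp2l // ltnS leq_addr.
Qed.

Lemma nEUU n : nE (\1_(UU n) : Omega -> R) <= eps R n / (MM n + 1).
Proof.
have h : 0 < eps R n / (MM n + 1).
  rewrite divr_gt0 ?eps_gt0 //; have [[_ _ _ _ M0] _] := PP n; exact: ltr_wpDl M0 ltr01.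
exact: ((etafP h).2 _ (mUU n) (muUU n)).
Qed.

Definition BB n := AA n `\` UU n.
Definition xx n := fun t => \1_(BB n) t * ww n t.

Lemma BB_disj n m t : (n < m)%N -> BB m t -> ~ BB n t.
Proof.
move=> nm [Am _] [_ nU]; apply: nU; exists (m - n.+1)%N => //.
by rewrite subnK.
Qed.

Lemma xx_disj n m t : n <> m -> xx n t = 0 \/ xx m t = 0.
Proof.
move=> nm; rewrite /xx.
case: (pselect (BB n t)) => Bn; last by left; rewrite indic_out // mul0r.
case: (pselect (BB m t)) => Bm; last by right; rewrite indic_out // mul0r.
exfalso; case: (ltngtP n m) => [h|h|h].
- exact: BB_disj h Bm Bn.
- exact: BB_disj h Bn Bm.
- exact: nm.
Qed.

Lemma mxx n : measurable_fun setT (xx n).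
Proof.
have [[mA _ mw _ _] _] := PP n.
exact: measurable_realfun.measurable_funM (@measurable_realfun.measurable_indic _ _ R setT _ (measurableD mA (mUU n))) mw.
Qed.

Lemma Exx n : E (xx n).
Proof.
have [[_ _ _ wM _] _] := PP n.
have xM : ae_le mu (fun t => `|xx n t|) (fun _ => MM n).
  apply: filterS wM => t /= h; rewrite /xx normrM indic_abs; apply: le_trans h.
  by apply: ler_piMl; rewrite ?indic_le1.
by case: (Linf_sub HE (mxx n) xM).
Qed.

Lemma wx_small n : nE (fsub (ww n) (xx n)) <= eps R n.
Proof.
have [[_ _ _ wM M0] [wz _ _]] := PP n.
have M10 : 0 < MM n + 1 by exact: ltr_wpDl M0 ltr01.
have EU := E_indic HE (mUU n).
apply: (@le_trans _ _ (nE (fun t => MM n * \1_(UU n) t))).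
  apply: (nE_lattice HE (E_fsub HE (Eww n) (Exx n)) (E_scale HE _ EU)).
  apply: filterS wM => t /= h; rewrite /fsub /xx.
  case: (pselect (BB n t)) => Bt; first by rewrite indic_in // mul1r subrr normr0.
  rewrite indic_out // mul0r subr0.
  case: (pselect (AA n t)) => At; last by rewrite wz // normr0.
  have Ut : UU n t by apply: contrapT => nU; apply: Bt.
  by rewrite indic_in // mulr1 (ger0_norm M0).
rewrite (nE_scale HE _ EU) ger0_norm //.
apply: le_trans (ler_wpM2l M0 (nEUU n)) _.
rewrite mulrA ler_pdivrMr // [X in X <= _]mulrC.
apply: ler_wpM2l; first exact: ltW (eps_gt0 _ _).
by rewrite lerDl.
Qed.

Lemma nExx n : 1/4 <= nE (xx n).
Proof.
have [_ [_ hw _]] := PP n.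
have := nE_rev HE (Eww n) (Exx n); apply: le_trans.
apply: (@le_trans _ _ (1/2 - eps R n)); last by apply: lerB => //; exact: wx_small.
have := eps_le R n; lra.
Qed.

Lemma Txx n : `|T (xx n)| <= (1 + K) * eps R n.
Proof.
have [_ [_ _ hT]] := PP n.
have -> : T (xx n) = T (ww n) - T (fsub (ww n) (xx n)).
  by rewrite (T_fsub HE HT (Eww n) (Exx n)) opprB addrC subrK.
apply: le_trans (ler_normB _ _) _.
rewrite mulrDl mul1r; apply: lerD => //.
apply: le_trans (hK (E_fsub HE (Eww n) (Exx n))) _.
by apply: ler_wpM2l => //; exact: wx_small.
Qed.

End Construct.

Lemma tail_sum (R : realType) (N L : nat) :
  \sum_(k < L | (N <= k)%N) eps R k <= ((2 ^ N.+2)%:R)^-1 - ((2 ^ (maxn N L).+2)%:R)^-1.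
Proof.
elim: L => [|L IH].
  by rewrite big_ord0 maxn0 subrr.
rewrite big_mkcond big_ord_recr /= -big_mkcond.
have p2 : forall m, (0:R) < (2 ^ m)%:R by move=> m; rewrite ltr0n expn_gt0.
case: (leqP N L) => NL.
  rewrite (maxn_idPr NL) in IH; rewrite (maxn_idPr (leqW NL)).
  apply: le_trans (lerD IH (lexx _)) _.
  have -> : eps R L = ((2 ^ L.+3)%:R)^-1 by [].
  have -> : ((2 ^ L.+2)%:R : R)^-1 = 2 * ((2 ^ L.+3)%:R)^-1.
    by rewrite [in RHS]expnS natrM invfM mulrA mulfV ?mul1r // pnatr_eq0.
  lra.
apply: le_trans (lerD IH (lexx 0)) _.
by rewrite addr0 (maxn_idPl (ltnW NL)) (maxn_idPl NL).
Qed.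

Lemma tail_sum' (R : realType) (N L : nat) :
  \sum_(k < L | (N <= k)%N) eps R k <= ((2 ^ N.+2)%:R)^-1.
Proof.
apply: le_trans (tail_sum R N L) _.
by rewrite lerBlDr lerDl invr_ge0 ler0n.
Qed.

Lemma cauchy_rate (R : realType) (u : nat -> R) (B : R) :
  (forall j j', `|u j - u j'| <= B / (j.+1)%:R + B / (j'.+1)%:R) ->
  exists a, forall j, `|u j - a| <= B / (j.+1)%:R.
Proof.
move=> hu.
pose S := [set u j - B / (j.+1)%:R | j in [set: nat]].
have ub : forall j, ubound S (u j + B / (j.+1)%:R).
  move=> j y [j' _ <-]; have := hu j' j; rewrite ler_norml => /andP[_ h].
  set a := B / (j.+1)%:R in h *. set b := B / (j'.+1)%:R in h *.
  have hh : u j' - b <= u j + a by lra.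
  exact: hh.
have hS : has_sup S by split; [exists (u 0%N - B / 1%:R); exists 0%N|exists (u 0%N + B / 1%:R); exact: ub].
exists (sup S) => j; rewrite ler_norml; apply/andP; split.
- have : sup S <= u j + B / (j.+1)%:R.
    by apply: ge_sup; [case: hS|exact: ub].
  set a := B / (j.+1)%:R; set s := sup S; lra.
- have : u j - B / (j.+1)%:R <= sup S by apply: sup_upper_bound => //; exists j.
  set a := B / (j.+1)%:R; set s := sup S; lra.
Qed.

Lemma le0_of_small (R : realType) (x Q : R) : (forall j : nat, x <= Q / (j.+1)%:R) -> x <= 0.
Proof.
move=> h; rewrite leNgt; apply/negP => x0.
have Q0 : 0 <= Q by have := h 0%N; rewrite divr1 => hq; apply: le_trans (ltW x0) hq.
pose j := Num.Def.archi_bound (Q / x).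
have hj := archi_boundP (divr_ge0 Q0 (ltW x0)).
have := h j; rewrite leNgt => /negP; apply.
rewrite ltr_pdivrMr ?ltr0n // mulrC -ltr_pdivrMr //.
by apply: lt_trans hj _; rewrite ltr_nat.
Qed.

Lemma linalg (R : realType) (N : nat) (alpha : 'I_N.+1 -> nat -> R) :
  exists b : 'I_N.+1 -> R, (exists i, b i != 0) /\
    forall k, (k < N)%N -> \sum_i b i * alpha i k = 0.
Proof.
pose M : 'M[R]_(N.+1, N) := \matrix_(i, k) alpha i k.
have hk : kermx M != 0.
  rewrite -mxrank_eq0 mxrank_ker subn_eq0 -ltnNge.
  by apply: leq_ltn_trans (rank_leq_col M) _.
have [i0 [j0 hij]] : exists i j, kermx M i j != 0.
  apply: contrapT => hn; move/negP: hk; apply; apply/eqP/matrixP => i j.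
  rewrite [X in _ = X]mxE; apply: contrapT => hne; apply: hn; exists i, j; exact/eqP.
exists (fun j => kermx M i0 j); split; first by exists j0.
move=> k kN.
have := mulmx_ker M; set KM := kermx M; move/matrixP => /(_ i0 (Ordinal kN)).
rewrite !mxE => h; rewrite -[RHS]h; apply: eq_bigr => i _; congr (_ * _); by rewrite /M mxE.
Qed.

Section SS.
Variables (d : measure_display) (Omega : measurableType d) (R : realType)
  (mu : probability Omega R) (E : set (Omega -> R)) (nE : (Omega -> R) -> R).
Hypothesis HE : ocbl_repr mu E nE.
Variables (Y : normedModType R) (T : (Omega -> R) -> Y).
Hypothesis HT : bdd_op mu E nE T.
Variables (K : R).
Hypothesis K0 : 0 <= K.
Hypothesis hK : forall f, E f -> `|T f| <= K * nE f.
Variable x : nat -> Omega -> R.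
Hypothesis Ex : forall n, E (x n).
Hypothesis nEx : forall n, 1/4 <= nE (x n).
Hypothesis Tx : forall n, `|T (x n)| <= (1 + K) * eps R n.
Hypothesis disj : forall n m t, n <> m -> x n t = 0 \/ x m t = 0.

Definition sumx (L : nat) (c : nat -> R) : Omega -> R := fun t => \sum_(k < L) c k * x k t.

Lemma E_sumx L c : E (sumx L c).
Proof. rewrite /sumx. have := @E_sum _ _ _ _ _ _ HE _ (index_enum (ordinal L)) (fun k : 'I_L => c k) (fun k : 'I_L => x k). by move=> h; apply: h => i; exact: Ex. Qed.

Lemma T_sumx L c : T (sumx L c) = \sum_(k < L) c k *: T (x k).
Proof. rewrite /sumx. have := @T_sum _ _ _ _ _ _ HE _ _ HT _ (index_enum (ordinal L)) (fun k : 'I_L => c k) (fun k : 'I_L => x k). by move=> h; apply: h => i; exact: Ex. Qed.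

Lemma CB L c k : (k < L)%N -> `|c k| <= 4 * nE (sumx L c).
Proof.
move=> kL.
have pt : forall t, `|c k * x k t| <= `|sumx L c t|.
  move=> t; case: (eqVneq (x k t) 0) => xk; first by rewrite xk mulr0 normr0.
  rewrite /sumx (bigD1 (Ordinal kL)) //= big1 ?addr0 //.
  move=> i /= ik.
  have ik' : (i : nat) <> k.
    by move=> h; move/negP: ik; apply; apply/eqP; apply: val_inj.
  case: (disj t ik') => [->|h]; first by rewrite mulr0.
  by move/eqP: xk.
have h1 := nE_le HE (E_scale HE (c k) (Ex k)) (E_sumx L c) pt.
rewrite (nE_scale HE _ (Ex k)) in h1.
have h2 : `|c k| * (1/4) <= `|c k| * nE (x k) by apply: ler_wpM2l.
set a := `|c k| in h1 h2 *; set s := nE (sumx L c) in h1 *; lra.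
Qed.

Lemma pad L L' c : (L <= L')%N ->
  sumx L c = sumx L' (fun k => if (k < L)%N then c k else 0).
Proof.
move=> LL; apply: funext => t; rewrite /sumx.
rewrite (big_ord_widen L' (fun k => c k * x k t) LL) big_mkcond.
by apply: eq_bigr => k _; case: ifP => //; rewrite mul0r.
Qed.

Lemma sum_pred_le (L N0 : nat) (F : nat -> R) : (forall k, 0 <= F k) ->
  \sum_(k < L | (k < N0)%N) F k <= \sum_(k < L) F k.
Proof.
move=> F0; rewrite big_mkcond; apply: ler_sum => k _.
by case: ifP => // _; exact: F0.
Qed.

Lemma Tbound L c N0 (B1 B2 : R) : 0 <= B1 -> 0 <= B2 ->
  (forall k, (k < L)%N -> (k < N0)%N -> `|c k| <= B1) ->
  (forall k, (k < L)%N -> `|c k| <= B2) ->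
  `|T (sumx L c)| <= (1 + K) * (B1 / 4 + B2 / (2 ^ N0.+2)%:R).
Proof.
move=> B10 B20 h1 h2.
have K1 : 0 <= 1 + K by apply: addr_ge0.
rewrite T_sumx; apply: le_trans (ler_norm_sum _ _ _) _.
apply: (@le_trans _ _ (\sum_(k < L) (1 + K) * (`|c k| * eps R k))).
  apply: ler_sum => k _; rewrite normrZ mulrCA; apply: ler_wpM2l => //.
rewrite -mulr_sumr; apply: ler_wpM2l => //.
rewrite (bigID (fun k : 'I_L => (k < N0)%N)) /=; apply: lerD.
- apply: (@le_trans _ _ (\sum_(k < L | (k < N0)%N) B1 * eps R k)).
    apply: ler_sum => k kN; apply: ler_wpM2r; first exact: ltW (eps_gt0 _ _).
    exact: h1.
  rewrite -mulr_sumr mulrC [X in _ <= X]mulrC; apply: ler_wpM2r => //.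
  apply: le_trans (sum_pred_le _ _ (fun k => ltW (eps_gt0 R k))) _.
  have := tail_sum' R 0 L; rewrite (eq_bigl (fun=> true)); last by move=> k; rewrite leq0n.
  by move=> h; apply: le_trans h _; rewrite (_ : (2^2)%N = 4%N).
- apply: (@le_trans _ _ (\sum_(k < L | (N0 <= k)%N) B2 * eps R k)).
    rewrite (eq_bigl (fun k : 'I_L => (N0 <= k)%N)); last by move=> k; rewrite -leqNgt.
    apply: ler_sum => k kN; apply: ler_wpM2r; first exact: ltW (eps_gt0 _ _).
    exact: h2.
  rewrite -mulr_sumr; apply: ler_wpM2l => //; exact: tail_sum'.
Qed.

Lemma SS_main : strictly_singular_on mu E nE T (closed_span E nE x).
Proof.
move=> Z [ZE Z0 [Zadd Zsc] Zae Zcl] ZW Zinf [c [c0 hc]].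
have K1 : 0 < 1 + K by rewrite addrC; exact: ltr_wpDl K0 ltr01.
have [N hN] := small_pow2 (δ := c / (2 * (1 + K))) (divr_gt0 c0 (mulr_gt0 (ltr0Sn R 1) K1)).
have [v [Zv indep]] := Zinf N.+1.
have happ : forall p : 'I_N.+1 * nat, exists q : nat * (nat -> R),
    nE (fsub (v p.1) (sumx q.1 q.2)) < ((p.2).+1%:R)^-1.
  move=> [i j]; have [_ h] := ZW _ (Zv i).
  have jp : (0:R) < (j.+1)%:R^-1 by rewrite invr_gt0 ltr0n.
  have [L [a ha]] := h _ jp.
  by exists (L, a).
have [q hq] := choice happ.
pose Lf i j := (q (i, j)).1.
pose af i j := (q (i, j)).2.
pose ah i j k := if (k < Lf i j)%N then af i j k else 0.
pose g i j := sumx (Lf i j) (af i j).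
have Eg i j : E (g i j) by apply: E_sumx.
have Ev i : E (v i) by apply: ZE.
have hg i j : nE (fsub (v i) (g i j)) < ((j.+1)%:R)^-1 := hq (i, j).
have hpad i j L' : (Lf i j <= L')%N -> g i j = sumx L' (ah i j) by move=> h; exact: pad.
have cauchy i k j j' : `|ah i j k - ah i j' k| <= 4 / (j.+1)%:R + 4 / (j'.+1)%:R.
  pose L' := maxn (Lf i j) (Lf i j').
  case: (ltnP k L') => kL.
    have e1 : fsub (g i j) (g i j') = sumx L' (fun k => ah i j k - ah i j' k).
      rewrite (hpad i j L') ?leq_maxl // (hpad i j' L') ?leq_maxr //.
      apply: funext => t; rewrite /fsub /sumx -sumrB; apply: eq_bigr => k' _; by rewrite mulrBl.
    apply: le_trans (CB (fun k => ah i j k - ah i j' k) kL) _; rewrite -e1.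
    have := nE_fsub_tri HE (Eg i j) (Ev i) (Eg i j').
    rewrite (nE_fsub_sym HE (Eg i j) (Ev i)) => h.
    have h1 := hg i j; have h2 := hg i j'.
    set a1 := nE (fsub (v i) (g i j)) in h h1 *.
    set a2 := nE (fsub (v i) (g i j')) in h h2 *.
    set s := nE (fsub (g i j) (g i j')) in h *.
    set r1 := ((j.+1)%:R)^-1 in h1 *; set r2 := ((j'.+1)%:R)^-1 in h2 *.
    lra.
  have h1 : ah i j k = 0.
    by rewrite /ah ifF //; apply/negbTE; rewrite -leqNgt; apply: leq_trans (leq_maxl _ _) kL.
  have h2 : ah i j' k = 0.
    by rewrite /ah ifF //; apply/negbTE; rewrite -leqNgt; apply: leq_trans (leq_maxr _ _) kL.
  by rewrite h1 h2 subrr normr0 addr_ge0 // divr_ge0.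
have halpha : forall p : 'I_N.+1 * nat, exists a, forall j, `|ah p.1 j p.2 - a| <= 4 / (j.+1)%:R.
  move=> [i k]; apply: cauchy_rate => j j'; exact: cauchy.
have [alf half] := choice halpha.
pose alpha i k := alf (i, k).
have [b [[i0 bi0] hb]] := linalg alpha.
pose f := fun t => \sum_i b i * v i t.
have Zf : Z f.
  have := @closed_sum _ _ _ Z _ (index_enum 'I_N.+1) b v Z0 Zadd Zsc Zv.
  by apply.
have Ef : E f := ZE _ Zf.
pose Bb := \sum_i `|b i|.
have Bb0 : 0 <= Bb by apply: sumr_ge0 => i _.
pose Q := Bb * (1 + K + c / 2 + K).
have key : forall j : nat, c / 2 * nE f <= Q / (j.+1)%:R.
  move=> j.
  pose Lj := (\max_i Lf i j)%N.
  pose beta k := \sum_i b i * ah i j k.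
  pose G := sumx Lj beta.
  have EG : E G by apply: E_sumx.
  have eG : G = fun t => \sum_i b i * g i j t.
    apply: funext => t.
    rewrite /G /sumx /beta.
    have -> : \sum_i b i * g i j t = \sum_i b i * sumx Lj (ah i j) t.
      by apply: eq_bigr => i _; rewrite (hpad i j Lj (@leq_bigmax _ (fun i => Lf i j) i)).
    rewrite /sumx.
    under eq_bigr => k _ do rewrite mulr_suml.
    rewrite exchange_big; apply: eq_bigr => i _; rewrite mulr_sumr; apply: eq_bigr => k _.
    by rewrite mulrA.
  have nfG : nE (fsub f G) <= Bb * ((j.+1)%:R)^-1.
    have -> : fsub f G = fun t => \sum_i b i * fsub (v i) (g i j) t.
      rewrite eG; apply: funext => t; rewrite /fsub -sumrB; apply: eq_bigr => i _; by rewrite mulrBr.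
    have := @nE_sum _ _ _ _ _ _ HE _ (index_enum 'I_N.+1) b (fun i => fsub (v i) (g i j)).
    move=> h.
    have h' : nE (fun t => \sum_i b i * fsub (v i) (g i j) t) <= \sum_i `|b i| * nE (fsub (v i) (g i j)).
      by apply: h => i; exact: (E_fsub HE (Ev i) (Eg i j)).
    apply: le_trans h' _.
    rewrite /Bb mulr_suml; apply: ler_sum => i _; apply: ler_wpM2l => //.
    exact: ltW (hg i j).
  have betaN : forall k, (k < Lj)%N -> (k < N)%N -> `|beta k| <= Bb * (4 / (j.+1)%:R).
    move=> k _ kN.
    have -> : beta k = \sum_i b i * (ah i j k - alpha i k).
      rewrite /beta; under [RHS]eq_bigr => i _ do rewrite mulrBr.
      by rewrite sumrB (hb k kN) subr0.
    apply: le_trans (ler_norm_sum _ _ _) _.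
    rewrite /Bb mulr_suml; apply: ler_sum => i _; rewrite normrM; apply: ler_wpM2l => //.
    exact: (half (i, k) j).
  have betaAll : forall k, (k < Lj)%N -> `|beta k| <= 4 * nE G.
    by move=> k kL; exact: CB.
  have B10 : 0 <= Bb * (4 / (j.+1)%:R) by rewrite mulr_ge0 // divr_ge0.
  have B20 : 0 <= 4 * nE G by rewrite mulr_ge0 // (nE_ge0 HE EG).
  have TG := Tbound (L:=Lj) (c:=beta) (N0:=N) B10 B20 betaN betaAll.
  have p2 : ((2 ^ N.+2)%:R : R) = (2 ^ N)%:R * 4.
    by rewrite !expnS mulnA mulnC natrM.
  set p := ((2 ^ N)%:R : R)^-1 in hN.
  have p0 : 0 < p by rewrite invr_gt0 ltr0n expn_gt0.
  have TG' : `|T G| <= (1 + K) * (Bb * ((j.+1)%:R)^-1) + ((1 + K) * p) * nE G.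
    apply: le_trans TG _; rewrite p2 invfM /p.
    have -> : Bb * (4 / (j.+1)%:R) / 4 = Bb * ((j.+1)%:R)^-1.
      by rewrite mulrA -mulrA [_^-1 * _]mulrC mulrA mulfK // pnatr_eq0.
    rewrite mulrDr; apply: lerD => //.
    have -> : 4 * nE G * ((2 ^ N)%:R^-1 / 4) = (2 ^ N)%:R^-1 * nE G by field.
    by rewrite mulrA.
  have hp : (1 + K) * p <= c / 2.
    have h := hN; rewrite ltr_pdivlMr ?mulr_gt0 // in h.
    rewrite ler_pdivlMr //.
    have -> : (1 + K) * p * 2 = p * (2 * (1 + K)) by ring.
    exact: ltW.
  have nG0 := nE_ge0 HE EG.
  have hG2 : ((1 + K) * p) * nE G <= c / 2 * nE G by apply: ler_wpM2r.
  have nGf : nE G <= nE f + nE (fsub f G).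
    have := nE_rev HE EG Ef; rewrite (nE_fsub_sym HE EG Ef); lra.
  have hG3 : c / 2 * nE G <= c / 2 * nE f + c / 2 * nE (fsub f G).
    by rewrite -mulrDr; apply: ler_wpM2l => //; rewrite divr_ge0 // ltW.
  have hG4 : c / 2 * nE (fsub f G) <= c / 2 * (Bb * ((j.+1)%:R)^-1).
    by apply: ler_wpM2l => //; rewrite divr_ge0 // ltW.
  have Tf : `|T f| <= `|T G| + K * nE (fsub f G).
    have -> : T f = T G + T (fsub f G) by rewrite (T_fsub HE HT Ef EG) addrC subrK.
    apply: le_trans (ler_normD _ _) _; rewrite lerD2l; apply: hK; exact: (E_fsub HE Ef EG).
  have hK2 : K * nE (fsub f G) <= K * (Bb * ((j.+1)%:R)^-1) by apply: ler_wpM2l.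
  have cf := hc f Zf.
  have eQ : Q / (j.+1)%:R = (1 + K) * (Bb * ((j.+1)%:R)^-1) + c / 2 * (Bb * ((j.+1)%:R)^-1)
       + K * (Bb * ((j.+1)%:R)^-1).
    by rewrite /Q; field; rewrite nat1r pnatr_eq0.
  rewrite eQ.
  set A1 := (1 + K) * (Bb * ((j.+1)%:R)^-1) in TG' eQ *.
  set A2 := c / 2 * (Bb * ((j.+1)%:R)^-1) in hG4 eQ *.
  set A3 := K * (Bb * ((j.+1)%:R)^-1) in hK2 eQ *.
  set X1 := (1 + K) * p * nE G in TG' hG2.
  set X2 := c / 2 * nE G in hG2 hG3.
  set X3 := c / 2 * nE f in hG3 *.
  set X4 := c / 2 * nE (fsub f G) in hG3 hG4.
  set X5 := K * nE (fsub f G) in Tf hK2.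
  have : c * nE f = 2 * X3 by rewrite /X3; field.
  move=> e2; lra.
have hnf := le0_of_small key.
have nf0 : nE f = 0.
  apply/eqP; rewrite eq_le (nE_ge0 HE Ef) andbT.
  by move: hnf; rewrite pmulr_rle0 // divr_gt0.
have := indep b ((nE_eq0 HE Ef).1 nf0) i0.
by move/eqP: bi0.
Qed.

End SS.

Theorem corollary3p2 (d : measure_display) (Omega : measurableType d)
  (R : realType) (mu : probability Omega R)
  (E : set (Omega -> R)) (nE : (Omega -> R) -> R)
  (Y : completeNormedModType R) (T : (Omega -> R) -> Y) :
  ocbl_repr mu E nE -> bdd_op mu E nE T -> DNS mu E nE T ->
  exists r : R, 0 < r /\
    forall A : set Omega, measurable A ->
      (0 < mu A)%E -> (mu A < r%:E)%E ->
      iso_on nE T (E_sub mu E A).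
Proof.
move=> HE HT HDNS.
apply: contrapT => hnot.
have Hneg : forall r : R, 0 < r -> exists A : set Omega,
    [/\ measurable A, (mu A < r%:E)%E & ~ iso_on nE T (E_sub mu E A)].
  move=> r r0; apply: contrapT => hn; apply: hnot; exists r; split => // A mA mA0 mAr.
  apply: contrapT => ni; apply: hn; exists A; by split.
have [K K0 hK] := KT_ex HE HT.
apply: HDNS.
pose x := @xx _ _ _ _ _ _ HE _ _ HT _ K0 hK Hneg.
exists x; split; last first.
  apply: (SS_main HE HT K0 hK).
  - exact: Exx.
  - exact: nExx.
  - exact: Txx.
  - exact: xx_disj.
split.
- exact: Exx.
- move=> n hz; have := (nE_eq0 HE (Exx HE HT K0 hK Hneg n)).2 hz.
  have := nExx HE HT K0 hK Hneg n; move=> h1 h2; rewrite h2 in h1; lra.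
- move=> n m nm; apply: aeW => t.
  rewrite /x; case: (xx_disj HE HT K0 hK Hneg t nm) => ->; rewrite normr0.
    by rewrite min_l.
  by rewrite min_r.
Qed.
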